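(* Let $\mathbf{t}$ be the Thue-Morse sequence. For every nonnegative integer $n$, $\mathbf{t}$ has an unbordered factor of length $n$ if and only if the base-$2$ representation of $n$ (written starting with the most significant digit, without leading zeroes) is not of the form $1(01^*0)^*10^*1$, i.e., does not belong to the regular language denoted by this regular expression.
   Context: The Thue-Morse sequence is $\mathbf{t} = t(0)t(1)t(2)\cdots = 0110100110010110\cdots$, where $t(n)$ is the sum modulo $2$ of the binary digits of $n$. For an infinite sequence $\mathbf{x}$, a factor of length $n$ is a word $\mathbf{x}[i..i+n-1] = \mathbf{x}[i]\mathbf{x}[i+1]\cdots\mathbf{x}[i+n-1]$ for some $i \geq 0$. A finite word $w$ is bordered if there is a word $x$ with $0 < |x| \leq |w|/2$ such that $w$ both begins and ends with $x$; otherwise $w$ is unbordered. In the regular expression, $^*$ denotes Kleene star and juxtaposition denotes concatenation. *)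

(* Defs.v *)
From mathcomp Require Import all_boot.
Set Implicit Arguments. Unset Strict Implicit. Unset Printing Implicit Defensive.

(* Binary digits of n, least significant first (fuel = n suffices). *)
Fixpoint bits_lsb (fuel n : nat) : seq bool :=
  match fuel with
  | 0 => [::]
  | f.+1 => if n is 0 then [::] else odd n :: bits_lsb f n./2
  end.

(* Base-2 representation of n, most significant digit first, no leading
   zeroes (so binary 0 = [::]). true = digit 1, false = digit 0. *)
Definition binary (n : nat) : seq bool := rev (bits_lsb n n).

Definition thue_morse (n : nat) : bool := odd (count id (binary n)).

Definition factor (x : nat -> bool) (i n : nat) : seq bool :=
  mkseq (fun j => x (i + j)) n.

Definition bordered (w : seq bool) : Prop :=
  exists u : seq bool, 0 < size u <= size w %/ 2 /\ prefix u w /\ suffix u w.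

Definition unbordered (w : seq bool) : Prop := ~ bordered w.

Inductive regex :=
  | REps
  | RSym of bool
  | RCat of regex & regex
  | RStar of regex.

Inductive matches : regex -> seq bool -> Prop :=
  | m_eps : matches REps [::]
  | m_sym b : matches (RSym b) [:: b]
  | m_cat r1 r2 s1 s2 : matches r1 s1 -> matches r2 s2 ->
      matches (RCat r1 r2) (s1 ++ s2)
  | m_star0 r : matches (RStar r) [::]
  | m_starS r s1 s2 : matches r s1 -> matches (RStar r) s2 ->
      matches (RStar r) (s1 ++ s2).

Notation "'d0'" := (RSym false).
Notation "'d1'" := (RSym true).

Definition re_thm4 : regex :=
  RCat d1 (RCat (RStar (RCat d0 (RCat (RStar d1) d0)))
                (RCat d1 (RCat (RStar d0) d1))).
Lemma sanity : [seq thue_morse i | i <- iota 0 16] =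
  [:: false;true;true;false;true;false;false;true;true;false;false;true;false;true;true;false].
Proof. by []. Qed.
Lemma sanity2 : binary 13 = [:: true; true; false; true]. Proof. by []. Qed.

(* Main.v *)
Require Import Defs.
From Stdlib Require Import NArith.
From mathcomp Require Import all_boot zify.
Set Implicit Arguments. Unset Strict Implicit. Unset Printing Implicit Defensive.


Notation t := thue_morse.

Lemma bits_fuel f g n : n <= f -> n <= g -> bits_lsb f n = bits_lsb g n.
Proof.
elim: f g n => [|f IH] [|g] [|n] //=; try lia.
move=> H1 H2; congr (_ :: _); apply: IH; lia.
Qed.

Lemma t_bits n : t n = odd (count id (bits_lsb n n)).
Proof. by rewrite /thue_morse /binary count_rev. Qed.

Lemma t2x x (c : bool) : t (2 * x + c) = c (+) t x.
Proof.
rewrite !t_bits.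
case E: (2 * x + c) => [|k].
  have [-> ->] : x = 0 /\ c = false by case: c E; lia.
  by [].
rewrite /=.
have -> : ~~ odd k = c by case: c E; lia.
have -> : uphalf k = x by case: c E; lia.
by rewrite (@bits_fuel k x x) ?oddD //; case: c E; lia.
Qed.

Lemma t2 x : t (2 * x) = t x.
Proof. by have := t2x x false; rewrite addn0. Qed.
Lemma t21 x : t (2 * x + 1) = ~~ t x.
Proof. by have := t2x x true. Qed.

Lemma t_half q : t q = odd q (+) t q./2.
Proof.
have {1}-> : q = 2 * q./2 + odd q by lia.
by rewrite t2x.
Qed.

Lemma nocube x : t x = t x.+1 -> t x.+1 = t x.+2 -> False.
Proof.
have [y [->|->]] : exists y, x = 2 * y \/ x = 2 * y + 1 by exists x./2; lia.
  have -> : (2 * y).+1 = 2 * y + 1 by lia.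
  by rewrite t2 t21; case: (t y).
have -> : (2 * y + 1).+1 = 2 * y.+1 by lia.
have -> : (2 * y.+1).+1 = 2 * y.+1 + 1 by lia.
by rewrite t2 !t21; case: (t y); case: (t y.+1).
Qed.

Definition Per i d n := forall j, j + d < n -> t (i + j) = t (i + j + d).

Lemma four_par y z : (forall j, j < 4 -> t (2 * y + j) = t (2 * z + 1 + j)) -> False.
Proof.
move=> H.
have h0 := H 0 erefl. have h1 := H 1 erefl. have h2 := H 2 erefl. have h3 := H 3 erefl.
move: h0 h1 h2 h3.
rewrite !addn0.
have -> : 2 * y + 2 = 2 * y.+1 by lia.
have -> : 2 * y + 3 = 2 * y.+1 + 1 by lia.
have -> : 2 * z + 1 + 1 = 2 * z.+1 by lia.
have -> : 2 * z + 1 + 2 = 2 * z.+1 + 1 by lia.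
have -> : 2 * z + 1 + 3 = 2 * z.+2 by lia.
rewrite !t2 !t21 => h0 h1 h2 h3.
apply: (@nocube z); move: h0 h1 h2 h3;
  case: (t y); case: (t y.+1); case: (t z); case: (t z.+1); case: (t z.+2) => //.
Qed.

Lemma per_odd i d n : Per i d n -> odd d -> n <= d + 3.
Proof.
move=> HP Hd; rewrite leqNgt; apply/negP => Hn.
have H j : j < 4 -> t (i + j) = t (i + d + j).
  move=> Hj; rewrite HP; [congr t; lia | lia].
have [y [Ei|Ei]] : exists y, i = 2 * y \/ i = 2 * y + 1 by exists i./2; lia.
  have [z Ez] : exists z, i + d = 2 * z + 1 by exists (i + d)./2; lia.
  by apply: (@four_par y z) => j Hj; rewrite -Ei -Ez H.
have [z Ez] : exists z, i + d = 2 * z by exists (i + d)./2; lia.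
by apply: (@four_par z y) => j Hj; rewrite -Ei -Ez H.
Qed.


Lemma xor_inj (c x y : bool) : c (+) x = c (+) y -> x = y.
Proof. by case: c; case: x; case: y. Qed.

Lemma per_even a (b r : bool) m e : 2 * e < 2 * m + r ->
  Per (2 * a + b) (2 * e) (2 * m + r) <-> Per a e (if b || r then m.+1 else m).
Proof.
move=> He; split => HP.
  move=> j Hj; case: j Hj => [|j] Hj.
    have := HP 0 (ltac:(lia)).
    have -> : 2 * a + b + 0 = 2 * (a + 0) + b by lia.
    have -> : 2 * (a + 0) + b + 2 * e = 2 * (a + 0 + e) + b by lia.
    by rewrite !t2x => /xor_inj.
  have := HP (2 * j.+1 - b) (ltac:(case: b r He Hj HP => [] [] /=; lia)).
  have -> : 2 * a + b + (2 * j.+1 - b) = 2 * (a + j.+1) by lia.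
  have -> : 2 * (a + j.+1) + 2 * e = 2 * (a + j.+1 + e) by lia.
  by rewrite !t2.
move=> k Hk.
have Hj : (b + k)./2 + e < (if b || r then m.+1 else m).
  by case: b r He Hk HP => [] [] /=; lia.
have -> : 2 * a + b + k = 2 * (a + (b + k)./2) + odd (b + k) by lia.
have -> : 2 * (a + (b + k)./2) + odd (b + k) + 2 * e
          = 2 * (a + (b + k)./2 + e) + odd (b + k) by lia.
by rewrite !t2x (HP _ Hj).
Qed.

Definition Gp k i n := exists d, 0 < d /\ d + k < n /\ Per i d n.

Definition Gb k i n : bool :=
  has (fun d => (0 < d) && (d + k < n) &&
     all (fun j => (j + d < n) ==> (t (i + j) == t (i + j + d))) (iota 0 n)) (iota 0 n).

Lemma GbP k i n : reflect (Gp k i n) (Gb k i n).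
Proof.
apply: (iffP hasP) => [[d Hd /andP [/andP [H1 H2] /allP H3]]|[d [H1 [H2 H3]]]].
  exists d; split => //; split => // j Hj.
  have Hjn : j \in iota 0 n by rewrite mem_iota; lia.
  by move: (H3 j Hjn) => /implyP /(_ Hj) /eqP.
exists d; first by rewrite mem_iota; lia.
rewrite H1 H2 /=; apply/allP => j _; apply/implyP => Hj.
by apply/eqP; apply: H3.
Qed.

Lemma per_mul i d n k : Per i d n -> Per i (k * d) n.
Proof.
move=> HP; elim: k => [|k IH] j Hj.
  by rewrite mul0n addn0.
rewrite HP; last by lia.
have -> : i + j + d = i + (j + d) by lia.
rewrite IH; last by lia.
congr t; lia.
Qed.

Lemma bordered_Gp i n : bordered (factor t i n) <-> Gp 0 i n.
Proof.
rewrite /bordered /factor; split.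
  move=> [u [/andP [Hu1 Hu2] [Hp Hs]]].
  rewrite size_mkseq in Hu2.
  move: Hp Hs; rewrite prefixE suffixE size_mkseq => /eqP Hp /eqP Hs.
  exists (n - size u); split; first by lia.
  split; first by lia.
  move=> j Hj.
  have Hju : j < size u by lia.
  have := congr1 (fun s => nth false s j) Hp.
  have := congr1 (fun s => nth false s j) Hs.
  have Hj1 : n - size u + j < n by lia.
  have Hj2 : j < n by lia.
  rewrite nth_drop nth_take // !nth_mkseq //.
  by move=> <- ->; rewrite [n - _ + j]addnC addnA.
move=> [d [H1 [H2 H3]]].
set k := (n - 1) %/ d.
have Hk1 : k * d <= n - 1 by rewrite /k leq_divM.
have Hk2 : n - 1 < k.+1 * d by rewrite /k ltn_ceil.
have HP := per_mul (k:=k) H3.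
clearbody k.
exists (take (n - k * d) (mkseq (fun j => t (i + j)) n)).
rewrite size_take size_mkseq.
have -> : (if n - k * d < n then n - k * d else n) = n - k * d.
  case: ifP => //; case: k Hk1 Hk2 {HP} => [|k]; rewrite ?mul0n; lia.
split.
  apply/andP; split; first by lia.
  case: k Hk1 Hk2 HP => [|k] Hk1 Hk2 HP; first by lia.
  have : d <= k.+1 * d by rewrite leq_pmull.
  lia.
split; first by rewrite prefixE size_take size_mkseq; case: ifP => //; lia.
rewrite suffixE size_take size_mkseq.
have -> : (if n - k * d < n then n - k * d else n) = n - k * d.
  case: ifP => //; case: k Hk1 Hk2 {HP} => [|k]; rewrite ?mul0n; lia.
apply/eqP; apply: (@eq_from_nth _ false).
  by rewrite size_drop size_take !size_mkseq; case: ifP; lia.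
rewrite size_drop size_mkseq => j Hj.
rewrite nth_drop nth_take; last by lia.
rewrite !nth_mkseq; try lia.
symmetry; rewrite HP; last by lia.
congr t; lia.
Qed.


Definition ov E j : option bool := if j <= E then Some (t (E - j)) else None.

Definition trip := (bool * bool * bool)%type.
Definition otrip := (option bool * option bool * option bool)%type.
Definition tauT := ((nat * bool) * trip * otrip * trip)%type.

Definition tau i n : tauT :=
  ((minn n 4, odd n), (t i, t (i + 1), t (i + 2)),
   (ov (i + n) 1, ov (i + n) 2, ov (i + n) 3),
   (Gb 0 i n, Gb 1 i n, Gb 2 i n)).

Definition Ob (k : nat) (s : trip) (e : otrip) (ns : nat) (r : bool) : bool :=
  let: (s0, s1, s2) := s in let: (e1, e2, e3) := e in
  [|| [&& k < 1, 1 < ns, ~~ r & e1 == Some s0],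
      [&& k < 2, 2 < ns, r, e2 == Some s0 & e1 == Some s1] |
      [&& k < 3, 3 < ns, ~~ r, e3 == Some s0, e2 == Some s1 & e1 == Some s2]].

Lemma ovE i n j : j <= n -> ov (i + n) j = Some (t (i + (n - j))).
Proof. move=> H; rewrite /ov ifT; last by lia. congr (Some (t _)); lia. Qed.

Lemma G_split k i n : Gp k i n <->
  (exists e, 0 < e /\ 2 * e + k < n /\ Per i (2 * e) n) \/
  Ob k (t i, t (i + 1), t (i + 2)) (ov (i + n) 1, ov (i + n) 2, ov (i + n) 3)
     (minn n 4) (odd n).
Proof.
split.
  move=> [d [H1 [H2 H3]]].
  case Hd: (odd d).
    have Hn := per_odd H3 Hd.
    right; rewrite /Ob.
    have [E|[E|E]] : n = d + 1 \/ n = d + 2 \/ n = d + 3 by lia.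
    - rewrite (@ovE i n 1); last by lia.
      have h0 := H3 0 (ltac:(lia)); rewrite addn0 in h0.
      apply/orP; left; apply/and4P; split; try lia.
      apply/eqP; rewrite h0; congr (Some (t _)); lia.
    - rewrite (@ovE i n 1) ?(@ovE i n 2); try lia.
      have h0 := H3 0 (ltac:(lia)); rewrite addn0 in h0. have h1 := H3 1 (ltac:(lia)).
      apply/orP; right; apply/orP; left; apply/and5P; split; try lia.
        apply/eqP; rewrite h0; congr (Some (t _)); lia.
      apply/eqP; rewrite h1; congr (Some (t _)); lia.
    - rewrite (@ovE i n 1) ?(@ovE i n 2) ?(@ovE i n 3); try lia.
      have h0 := H3 0 (ltac:(lia)); rewrite addn0 in h0. have h1 := H3 1 (ltac:(lia)).
      have h2 := H3 2 (ltac:(lia)).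
      apply/orP; right; apply/orP; right; apply/and5P; split; try lia.
        apply/eqP; rewrite h0; congr (Some (t _)); lia.
      apply/andP; split.
        apply/eqP; rewrite h1; congr (Some (t _)); lia.
      apply/eqP; rewrite h2; congr (Some (t _)); lia.
  left; exists d./2; split; first by lia.
  have -> : 2 * d./2 = d by lia.
  by split.
case=> [[e [H1 [H2 H3]]]|].
  by exists (2 * e); split; [lia|split].
rewrite /Ob => /or3P [/and4P [Hk Hn Hr /eqP He]|/and5P [Hk Hn Hr /eqP He1 /eqP He2]
                   |/and5P [Hk Hn Hr /eqP He1 /andP [/eqP He2 /eqP He3]]].
- exists (n - 1); split; first by lia. split; first by lia.
  move: He; rewrite ovE; last by lia.
  case=> He j Hj.
  have -> : j = 0 by lia.
  symmetry; rewrite ?addn0 -He; congr t; lia.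
- exists (n - 2); split; first by lia. split; first by lia.
  move: He1 He2; rewrite !ovE; try lia.
  case=> He1 [] He2 j Hj.
  have [->|->] : j = 0 \/ j = 1 by lia.
    symmetry; rewrite ?addn0 -He1; congr t; lia.
  symmetry; rewrite ?addn0 -He2; congr t; lia.
- exists (n - 3); split; first by lia. split; first by lia.
  move: He1 He2 He3; rewrite !ovE; try lia.
  case=> He1 [] He2 [] He3 j Hj.
  have [->|[->|->]] : j = 0 \/ j = 1 \/ j = 2 by lia.
  + symmetry; rewrite ?addn0 -He1; congr t; lia.
  + symmetry; rewrite ?addn0 -He2; congr t; lia.
  + symmetry; rewrite ?addn0 -He3; congr t; lia.
Qed.


Definition Fns (ns : nat) (r : bool) := minn (ns.*2 + r) 4.
Definition Fs (b : bool) (s : trip) : trip :=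
  let: (s0, s1, s2) := s in if b then (~~ s0, s1, ~~ s1) else (s0, ~~ s0, s1).
Definition Fe (b r : bool) (e : otrip) : otrip :=
  let: (h1, h2, h3) := e in
  match b, r with
  | false, false => (omap negb h2, h2, omap negb h3)
  | true, true => (omap negb h1, h1, omap negb h2)
  | _, _ => (h1, omap negb h2, h2)
  end.
Definition pick (k : nat) (g : trip) : bool :=
  let: (g0, g1, g2) := g in if k is 0 then g0 else if k is 1 then g1 else g2.
Definition FH (k : nat) (b r : bool) (lg hg : trip) : bool :=
  match b, r with
  | false, false => pick k./2 lg
  | true, false => pick (k./2).+1 hg
  | _, true => pick (uphalf k) hg
  end.

Definition Ftau (b r : bool) (lo hi : tauT) : tauT :=
  let: (ns, _, s, _, lg) := lo in
  let: (_, _, e, hg) := hi in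
  let ns' := Fns ns r in
  let s' := Fs b s in
  let e' := Fe b r e in
  ((ns', r), s', e',
   (FH 0 b r lg hg || Ob 0 s' e' ns' r,
    FH 1 b r lg hg || Ob 1 s' e' ns' r,
    FH 2 b r lg hg || Ob 2 s' e' ns' r)).

Lemma tq q x (c : bool) : q = 2 * x + c -> t q = c (+) t x.
Proof. by move->; rewrite t2x. Qed.

Lemma L1 m (r : bool) : Fns (minn m 4) r = minn (2 * m + r) 4.
Proof. rewrite /Fns; case: r; lia. Qed.

Lemma L2 a (b : bool) :
  Fs b (t a, t (a + 1), t (a + 2)) = (t (2 * a + b), t (2 * a + b + 1), t (2 * a + b + 2)).
Proof.
case: b => /=.
  rewrite (@tq (2 * a + 1) a true) ?(@tq (2 * a + 1 + 1) (a + 1) false)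
          ?(@tq (2 * a + 1 + 2) (a + 1) true) //; lia.
rewrite (@tq (2 * a + 0) a false) ?(@tq (2 * a + 0 + 1) a true)
        ?(@tq (2 * a + 0 + 2) (a + 1) false) //; lia.
Qed.

Lemma ov_same E E' j j' : (j <= E <-> j' <= E') -> (j <= E -> E - j = 2 * (E' - j')) ->
  ov E j = ov E' j'.
Proof.
rewrite /ov => H1 H2; case: ifP => Hj.
  rewrite ifT; last by apply/H1.
  by rewrite (@tq (E - j) (E' - j') false) ?H2 ?addn0.
by rewrite ifF //; apply/negP => /H1; rewrite Hj.
Qed.

Lemma ov_neg E E' j j' : (j <= E <-> j' <= E') -> (j <= E -> E - j = 2 * (E' - j') + 1) ->
  ov E j = omap negb (ov E' j').
Proof.
rewrite /ov => H1 H2; case: ifP => Hj.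
  rewrite ifT; last by apply/H1.
  by rewrite /= (@tq (E - j) (E' - j') true) ?H2.
by rewrite ifF //; apply/negP => /H1; rewrite Hj.
Qed.

Lemma L3 a m (b r : bool) :
  Fe b r (ov (a + m.+1) 1, ov (a + m.+1) 2, ov (a + m.+1) 3) =
  (ov (2 * a + b + (2 * m + r)) 1, ov (2 * a + b + (2 * m + r)) 2,
   ov (2 * a + b + (2 * m + r)) 3).
Proof.
case: b; case: r => /=; congr (_, _, _);
  (apply: esym; first [apply: ov_same | apply: ov_neg]; [split; lia | lia]).
Qed.

Lemma beq_iff (b c : bool) : (b <-> c) -> b = c.
Proof. by move=> H; apply/idP/idP => /H. Qed.

Lemma H_rec a m (b r : bool) k : k <= 2 ->
  (exists e, 0 < e /\ 2 * e + k < 2 * m + r /\ Per (2 * a + b) (2 * e) (2 * m + r)) <->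
  FH k b r (Gb 0 a m, Gb 1 a m, Gb 2 a m) (Gb 0 a m.+1, Gb 1 a m.+1, Gb 2 a m.+1).
Proof.
move=> Hk.
have [k' [N [HFH [HN Har]]]] : exists k' N,
  FH k b r (Gb 0 a m, Gb 1 a m, Gb 2 a m) (Gb 0 a m.+1, Gb 1 a m.+1, Gb 2 a m.+1) = Gb k' a N
  /\ N = (if b || r then m.+1 else m) /\ (forall e, 2 * e + k < 2 * m + r <-> e + k' < N).
  case: b; case: r; (have [->|[->|->]] : k = 0 \/ k = 1 \/ k = 2 by lia);
  eexists; eexists; (split; [reflexivity | split; [reflexivity | move=> e /=; split; lia]]).
rewrite HFH; split.
  move=> [e [H1 [H2 H3]]]; apply/GbP; exists e; split => //; split; first by apply/Har.
  by rewrite HN -per_even //; lia.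
move/GbP => [e [H1 [H2 H3]]]; exists e.
have H2' := proj2 (Har e) H2.
split => //; split => //.
by apply/per_even; [lia | rewrite -HN].
Qed.

Lemma L4 a m (b r : bool) k : k <= 2 ->
  Gb k (2 * a + b) (2 * m + r) =
  FH k b r (Gb 0 a m, Gb 1 a m, Gb 2 a m) (Gb 0 a m.+1, Gb 1 a m.+1, Gb 2 a m.+1)
  || Ob k (t (2 * a + b), t (2 * a + b + 1), t (2 * a + b + 2))
       (ov (2 * a + b + (2 * m + r)) 1, ov (2 * a + b + (2 * m + r)) 2,
        ov (2 * a + b + (2 * m + r)) 3) (minn (2 * m + r) 4) (odd (2 * m + r)).
Proof.
move=> Hk; apply: beq_iff.
have HR := H_rec a m b r Hk.
split.
  move/GbP/G_split => [H|H]; apply/orP; [by left; apply/HR | by right].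
move/orP => [H|H]; apply/GbP/G_split; [by left; apply/HR | by right].
Qed.

Lemma tau_rec a m (b r : bool) :
  tau (2 * a + b) (2 * m + r) = Ftau b r (tau a m) (tau a m.+1).
Proof.
rewrite /tau /Ftau L1 L2 L3 !L4 //.
have -> : odd (2 * m + r) = r by case: r; lia.
by [].
Qed.


Definition sigT := (tauT * tauT * tauT)%type.
Definition sig a m : sigT := (tau a m, tau a m.+1, tau a m.+2).
Definition Fsig (b r : bool) (x : sigT) : sigT :=
  let: (x0, x1, x2) := x in
  if r then (Ftau b true x0 x1, Ftau b false x1 x2, Ftau b true x1 x2)
  else (Ftau b false x0 x1, Ftau b true x0 x1, Ftau b false x1 x2).

Lemma sig_rec a m (b r : bool) : sig (2 * a + b) (2 * m + r) = Fsig b r (sig a m).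
Proof.
rewrite /sig /Fsig; case: r.
  rewrite -!tau_rec.
  have -> : (2 * m + true).+1 = 2 * m.+1 + false by rewrite /=; lia.
  have -> : (2 * m.+1 + false).+1 = 2 * m.+1 + true by rewrite /=; lia.
  by [].
rewrite -!tau_rec.
have -> : (2 * m + false).+1 = 2 * m + true by rewrite /=; lia.
have -> : (2 * m + true).+1 = 2 * m.+1 + false by rewrite /=; lia.
by [].
Qed.

Definition R0 : seq sigT := [seq sig a 0 | a <- iota 0 27].

Definition eqo (x y : option bool) : bool :=
  match x, y with Some a, Some b => eqb a b | None, None => true | _, _ => false end.
Definition eqtr (x y : trip) : bool :=
  let: (a0, a1, a2) := x in let: (b0, b1, b2) := y in [&& eqb a0 b0, eqb a1 b1 & eqb a2 b2].
Definition eqotr (x y : otrip) : bool :=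
  let: (a0, a1, a2) := x in let: (b0, b1, b2) := y in [&& eqo a0 b0, eqo a1 b1 & eqo a2 b2].
Definition eqtau (x y : tauT) : bool :=
  let: (n1, p1, s1, e1, g1) := x in let: (n2, p2, s2, e2, g2) := y in
  [&& Nat.eqb n1 n2, eqb p1 p2, eqtr s1 s2, eqotr e1 e2 & eqtr g1 g2].
Definition eqsig (x y : sigT) : bool :=
  let: (a0, a1, a2) := x in let: (b0, b1, b2) := y in [&& eqtau a0 b0, eqtau a1 b1 & eqtau a2 b2].

Definition kb (b : bool) (acc : N) : N := (2 * acc + (if b then 1 else 0))%num.
Definition ko (o : option bool) (acc : N) : N :=
  (3 * acc + (match o with None => 0 | Some false => 1 | Some true => 2 end))%num.
Definition ktau (x : tauT) (acc : N) : N :=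
  let: (n, p, (s0, s1, s2), (e1, e2, e3), (g0, g1, g2)) := x in
  kb g2 (kb g1 (kb g0 (ko e3 (ko e2 (ko e1 (kb s2 (kb s1 (kb s0 (kb p (N.of_nat n + 8 * acc)%num))))))))).
Definition key (x : sigT) : N := let: (a0, a1, a2) := x in ktau a2 (ktau a1 (ktau a0 0%num)).

Fixpoint dedup (s : seq sigT) : seq sigT :=
  match s with
  | x :: ((y :: _) as s') => if eqsig x y then dedup s' else x :: dedup s'
  | _ => s
  end.

Definition canon (s : seq sigT) : seq sigT :=
  dedup (map snd (sort (fun p q : N * sigT => N.leb p.1 q.1) (map (fun x => (key x, x)) s))).

Definition stepS (S : seq sigT) (r : bool) : seq sigT :=
  canon [seq Fsig b r x | x <- S, b <- [:: false; true]].

Fixpoint eqseqf (s1 s2 : seq sigT) : bool :=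
  match s1, s2 with
  | [::], [::] => true
  | x :: s1', y :: s2' => eqsig x y && eqseqf s1' s2'
  | _, _ => false
  end.

Definition delta (q : nat) (c : bool) : nat :=
  match q, c with
  | 0, true => 1
  | 1, false => 2
  | 1, true => 3
  | 2, true => 2
  | 2, false => 1
  | 3, false => 3
  | 3, true => 4
  | _, _ => 5
  end.

Definition flag (x : sigT) : bool := let: ((_, _, _, (g0, _, _)), _, _) := x in ~~ g0.

Definition entries : seq (nat * bool) := [:: (0, false); (0, true); (1, false); (1, true); (2, false); (2, true); (3, false); (3, true); (4, false); (4, true); (5, false); (5, true); (6, false); (6, true); (7, false); (7, true); (8, false); (8, true); (9, false); (9, true); (10, false); (10, true); (11, false); (11, true); (12, false); (12, true); (13, false); (13, true); (14, false); (14, true); (15, false); (15, true); (16, false); (16, true); (17, false); (17, true); (18, false); (18, true); (19, false); (19, true); (20, false); (20, true); (21, false); (21, true); (22, false); (24, false); (24, true); (25, false); (25, true); (26, false); (26, true); (27, false); (27, true); (28, false); (28, true); (29, false); (29, true); (30, false); (31, false); (32, false); (32, true); (33, false); (33, true); (34, false); (34, true); (35, false); (35, true); (36, false); (37, false); (37, true); (38, false); (39, false); (39, true); (40, false); (40, true); (41, false); (43, false); (43, true); (44, false); (46, false); (48, false); (48, true); (49, false); (49, true); (50, false); (50, true); (51, false); (52, false); (52, true); (53, false); (53, true); (54, false); (54, true); (55, false); (56, false); (56, true); (57, false); (60, false); (60, true); (61, false); (62, false); (62, true); (63, false); (63, true); (64, false); (64, true); (65, false); (66, false); (67, false); (72,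 false); (73, false); (73, true); (74, false); (77, false); (77, true); (78, false); (81, false); (82, false); (85, false); (85, true); (86, false); (89, false); (89, true); (90, false); (95, false); (95, true); (96, false); (101, false); (101, true); (102, false); (102, true); (103, false); (105, false); (105, true); (106, false); (111, false); (114, false); (115, false); (119, false); (120, false); (122, false); (126, false); (128, false); (130, false); (133, false); (133, true); (145, false)].
Definition succ : seq (nat * nat) := [:: (1, 2); (3, 4); (5, 6); (7, 8); (9, 10); (11, 12); (13, 14); (15, 16); (17, 18); (19, 20); (21, 22); (23, 24); (25, 26); (27, 28); (29, 30); (31, 32); (33, 34); (35, 36); (37, 38); (39, 40); (41, 42); (43, 44); (45, 22); (23, 24); (46, 47); (48, 49); (50, 51); (52, 53); (54, 55); (56, 57); (58, 30); (59, 16); (60, 61); (62, 63); (64, 65); (66, 67); (68, 38); (69, 70); (71, 51); (72, 73); (74, 75); (76, 36); (37, 38); (77, 78); (79, 42); (43, 44); (80, 70); (71, 51); (81, 82); (83, 84); (85, 86); (87, 51); (88, 89); (90, 91); (92, 93); (94, 51); (95, 96); (97, 55); (56, 57); (31, 32); (98, 99); (100, 38); (101, 102); (103, 104); (105, 106); (107, 65); (108, 99); (109, 38); (69, 70); (81, 82); (83, 84); (85, 86); (110, 40); (111, 112); (113, 63); (64, 65); (66, 67); (114, 115); (116, 75); (76, 36); (81, 82); (117, 70); (118, 84); (85, 86); (87, 51); (119, 120); (121, 84); (85, 86); (52, 53); (122, 123); (124, 86); (87, 51); (119, 120); (121, 84); (85, 86); (125, 126); (127, 91); (92, 93); (66,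 67); (68, 38); (69, 70); (128, 129); (130, 131); (132, 99); (100, 38); (133, 134); (135, 104); (105, 106); (66, 67); (69, 70); (72, 73); (136, 99); (100, 38); (101, 102); (137, 78); (138, 112); (113, 63); (81, 82); (85, 86); (139, 86); (140, 84); (85, 86); (141, 86); (87, 51); (119, 120); (95, 96); (142, 123); (124, 86); (143, 102); (103, 104); (144, 63); (64, 65); (66, 67); (145, 146); (130, 131); (132, 99); (66, 67); (114, 115); (136, 99); (119, 120); (85, 86); (119, 120); (141, 86); (128, 129); (101, 102); (147, 134); (103, 104); (145, 146)].


Definition g_S (acc : seq (seq sigT)) (pr : nat * bool) : seq (seq sigT) :=
  rcons acc (stepS (nth [::] acc pr.1) pr.2).
Definition Sl : seq (seq sigT) := foldl g_S [:: stepS R0 true] entries.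
Definition ql : seq nat :=
  foldl (fun acc pr => rcons acc (delta (nth 0 acc pr.1) pr.2)) [:: 1] entries.

Definition checkR0 : bool := all (fun x => (Fsig false false x \in R0) && (Fsig true false x \in R0)) R0.

Definition tree (j i : nat) (r : bool) : bool := (0 < j) && (nth (0, false) entries j.-1 == (i, r)).

Definition checkE : bool := all (fun k => (nth (0, false) entries k).1 <= k) (iota 0 (size entries)).

Definition checkC_gen (Sl : seq (seq sigT)) (ql : seq nat) : bool :=
  (size ql == size Sl) && (size succ == size Sl) &&
  all (fun i => let S := nth [::] Sl i in let q := nth 0 ql i in
         let: (j0, j1) := nth (0, 0) succ i in
         [&& j0 < size Sl, j1 < size Sl, (if tree j0 i false then true else eqseqf (stepS S false) (nth [::] Sl j0)),
             nth 0 ql j0 == delta q false, (if tree j1 i true then true else eqseqf (stepS S true) (nth [::] Sl j1)) &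
             nth 0 ql j1 == delta q true]) (iota 0 (size Sl)).

Definition checkA_gen (Sl : seq (seq sigT)) (ql : seq nat) : bool :=
  all (fun i => has flag (nth [::] Sl i) == (nth 0 ql i != 4)) (iota 0 (size Sl)).

Definition check_gen (Sl : seq (seq sigT)) (ql : seq nat) : bool :=
  [&& checkE, checkC_gen Sl ql & checkA_gen Sl ql].

Lemma checkR0_ok : checkR0 = true. Proof. vm_compute. reflexivity. Qed.
Lemma check_ok : check_gen Sl ql = true. Proof. vm_compute. reflexivity. Qed.


Lemma Lm_sym b s : matches (RSym b) s <-> s = [:: b].
Proof. split; [by move=> H; inversion H | by move->; constructor]. Qed.

Lemma Lm_cat r1 r2 s : matches (RCat r1 r2) s <->
  exists s1 s2, s = s1 ++ s2 /\ matches r1 s1 /\ matches r2 s2.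
Proof.
split; first by move=> H; inversion H; subst; exists s1, s2.
by move=> [s1 [s2 [-> [H1 H2]]]]; constructor.
Qed.

Lemma Lm_star r s : matches (RStar r) s <->
  s = [::] \/ exists s1 s2, s = s1 ++ s2 /\ matches r s1 /\ matches (RStar r) s2.
Proof.
split; first by move=> H; inversion H; subst; [left | right; exists s1, s2].
by move=> [->|[s1 [s2 [-> [H1 H2]]]]]; constructor.
Qed.

Lemma starsym_aux b n s : size s <= n -> matches (RStar (RSym b)) s -> s = nseq (size s) b.
Proof.
elim: n s => [|n IH] s Hs.
  by case: s Hs.
move/Lm_star => [->//|[s1 [s2 [E [/Lm_sym E1 H2]]]]].
subst s s1 => /=; congr (_ :: _); apply: IH => //; by move: Hs; rewrite /= ltnS.
Qed.

Lemma Lm_starsym b s : matches (RStar (RSym b)) s <-> s = nseq (size s) b.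
Proof.
split; first exact: (starsym_aux (leqnn _)).
elim: s => [|c s IH] /=; first by move=> _; constructor.
case=> -> Hs; rewrite -cat1s; constructor; first by constructor.
exact: IH.
Qed.

Definition Blk : regex := RCat d0 (RCat (RStar d1) d0).
Definition Tl : regex := RCat d1 (RCat (RStar d0) d1).

Lemma Lm_blk s : matches Blk s <-> exists k, s = false :: nseq k true ++ [:: false].
Proof.
split.
  move/Lm_cat => [s1 [s2 [-> [/Lm_sym -> /Lm_cat [s3 [s4 [-> [/Lm_starsym H3 /Lm_sym ->]]]]]]]].
  by exists (size s3); rewrite -H3.
move=> [k ->]; rewrite -cat1s; constructor; first by constructor.
constructor; last by constructor.
by apply/Lm_starsym; rewrite size_nseq.
Qed.

Lemma Lm_tl s : matches Tl s <-> exists k, s = true :: nseq k false ++ [:: true].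
Proof.
split.
  move/Lm_cat => [s1 [s2 [-> [/Lm_sym -> /Lm_cat [s3 [s4 [-> [/Lm_starsym H3 /Lm_sym ->]]]]]]]].
  by exists (size s3); rewrite -H3.
move=> [k ->]; rewrite -cat1s; constructor; first by constructor.
constructor; last by constructor.
by apply/Lm_starsym; rewrite size_nseq.
Qed.

Lemma acc5 w : foldl delta 5 w = 5.
Proof. by elim: w. Qed.

Lemma acc4 w : foldl delta 4 w = 4 <-> w = [::].
Proof. by case: w => [|c w] //; case: c; rewrite /= acc5. Qed.

Lemma acc3 w : foldl delta 3 w = 4 <-> exists k, w = nseq k false ++ [:: true].
Proof.
elim: w => [|c w IH] /=.
  by split => // [[k Hk]]; case: k Hk.
case: c => /=.
  rewrite acc4; split; first by move->; exists 0.
  by move=> [k Hk]; case: k Hk => [|k] //= [].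
rewrite IH; split; first by move=> [k ->]; exists k.+1.
by move=> [k Hk]; case: k Hk => [|k] //= [->]; exists k.
Qed.

Lemma acc2 w : foldl delta 2 w = 4 <->
  exists k w', w = nseq k true ++ false :: w' /\ foldl delta 1 w' = 4.
Proof.
elim: w => [|c w IH] /=.
  by split => // [[k [w' [Hk _]]]]; case: k Hk.
case: c => /=.
  rewrite IH; split; first by move=> [k [w' [-> H]]]; exists k.+1, w'.
  by move=> [k [w' [Hk H]]]; case: k Hk => [|k] //= [->]; exists k, w'.
split; first by move=> H; exists 0, w.
by move=> [k [w' [Hk H]]]; case: k Hk => [|k] //= [->].
Qed.

Lemma nseq_blk k : foldl delta 2 (nseq k true) = 2.
Proof. by elim: k. Qed.

Lemma acc1 w : foldl delta 1 w = 4 <->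
  exists x y, w = x ++ y /\ matches (RStar Blk) x /\ matches Tl y.
Proof.
elim: w {-2}w (leqnn (size w)) => [|c w IH] w0 Hw0.
  case: w0 Hw0 => // _; split => // [[x [y [Hxy [_ /Lm_tl [k Hy]]]]]].
  by move: Hxy; rewrite Hy; case: x.
split.
  case: w0 Hw0 => [//|[] w1] Hw1 /=.
    move/acc3 => [k Hk]; exists [::], (true :: w1); split => //; split; first by constructor.
    by apply/Lm_tl; exists k; rewrite Hk.
  move/acc2 => [k [w' [Hw' Hacc]]].
  have Hs : size w' <= size w by move: Hw1; rewrite /= Hw' size_cat /=; lia.
  move: (IH w' Hs) => [/(_ Hacc) [x [y [Hxy [Hx Hy]]]] _].
  exists ((false :: nseq k true ++ [:: false]) ++ x), y; split.
    by rewrite Hw' Hxy /= -!catA.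
  split => //; constructor => //.
  by apply/Lm_blk; exists k.
move=> [x [y [Hxy [/Lm_star [Hx|[s1 [s2 [Hs [/Lm_blk [k Hk] Hs2]]]]] Hy]]]].
  move: Hy => /Lm_tl [k Hy].
  by rewrite Hxy Hx Hy /=; apply/acc3; exists k.
rewrite Hxy Hs Hk /= !foldl_cat nseq_blk /=.
have Hs2y : size (s2 ++ y) <= size w.
  by move: Hw0; rewrite Hxy Hs Hk /= !size_cat /=; lia.
by rewrite -foldl_cat; apply/(IH _ Hs2y); exists s2, y.
Qed.

Lemma re_dfa w : matches re_thm4 w <-> foldl delta 0 w = 4.
Proof.
rewrite /re_thm4; split.
  move/Lm_cat => [s1 [s2 [-> [/Lm_sym -> /Lm_cat [x [y [-> [Hx Hy]]]]]]]] /=.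
  by apply/acc1; exists x, y.
case: w => [//|[] w] /=; last by rewrite acc5.
move/acc1 => [x [y [-> [Hx Hy]]]].
rewrite -cat1s; constructor; first by constructor.
by constructor.
Qed.


Lemma eqbP' (a b : bool) : eqb a b -> a = b.
Proof. by case: a; case: b. Qed.

Lemma eqo_eq x y : eqo x y -> x = y.
Proof. by case: x => [a|]; case: y => [b|] //= /eqbP' ->. Qed.

Lemma eqtr_eq x y : eqtr x y -> x = y.
Proof.
by case: x => [[a0 a1] a2]; case: y => [[b0 b1] b2] /and3P [/eqbP' -> /eqbP' -> /eqbP' ->].
Qed.

Lemma eqotr_eq x y : eqotr x y -> x = y.
Proof.
by case: x => [[a0 a1] a2]; case: y => [[b0 b1] b2] /and3P [/eqo_eq -> /eqo_eq -> /eqo_eq ->].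
Qed.

Lemma nateqb_eq a b : Nat.eqb a b -> a = b.
Proof. by elim: a b => [|a IH] [|b] //= /IH ->. Qed.

Lemma eqtau_eq x y : eqtau x y -> x = y.
Proof.
case: x => [[[[n1 p1] s1] e1] g1]; case: y => [[[[n2 p2] s2] e2] g2].
move=> /and5P [/nateqb_eq -> /eqbP' -> /eqtr_eq -> /eqotr_eq -> /eqtr_eq ->].
by [].
Qed.

Lemma eqsig_eq x y : eqsig x y -> x = y.
Proof.
by case: x => [[a0 a1] a2]; case: y => [[b0 b1] b2] /and3P [/eqtau_eq -> /eqtau_eq -> /eqtau_eq ->].
Qed.

Lemma eqseqf_eq s1 s2 : eqseqf s1 s2 -> s1 = s2.
Proof.
elim: s1 s2 => [|x s1 IH] [|y s2] //= /andP [/eqsig_eq -> /IH ->] //.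
Qed.

Lemma mem_dedup s : dedup s =i s.
Proof.
elim: s => [|x s IH] //=.
case: s IH => [|y s] IH //=.
case: ifP => [/eqsig_eq ->|_] z.
  by rewrite IH !inE; case: (z == y).
by rewrite inE IH.
Qed.

Lemma mem_canon s y : (y \in canon s) = (y \in s).
Proof.
rewrite /canon mem_dedup; apply/mapP/idP => [[p]|Hy].
  by rewrite mem_sort => /mapP [x Hx ->] ->.
by exists (key y, y) => //; rewrite mem_sort; apply/mapP; exists y.
Qed.

Lemma mem_stepS S r y : y \in stepS S r <-> exists x, x \in S /\ exists b, y = Fsig b r x.
Proof.
rewrite /stepS mem_canon; split.
  by move/allpairsP => [[x b] [/= Hx _ ->]]; exists x; split => //; exists b.
move=> [x [Hx [b ->]]]; apply/allpairsP; exists (x, b); split => //=.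
by case: b.
Qed.

Lemma R0_all a : sig a 0 \in R0.
Proof.
have HC := checkR0_ok.
elim/ltn_ind: a => a IH.
case: a IH => [|a] IH; first by [].
have Ha : a.+1 = 2 * (a.+1)./2 + odd a.+1 by lia.
have H0 : 0 = 2 * 0 + false by [].
rewrite Ha H0 sig_rec.
have Hin := IH (a.+1)./2 (ltac:(lia)).
move: HC; rewrite /checkR0 => /allP /(_ _ Hin) /andP [H1 H2].
by case: (odd a.+1).
Qed.

Lemma R0_ok x : x \in R0 <-> exists a, sig a 0 = x.
Proof.
split; last by move=> [a <-]; apply: R0_all.
by move/mapP => [a _ ->]; exists a.
Qed.

Lemma step_ok S m r : (forall x, x \in S <-> exists a, sig a m = x) ->
  forall y, y \in stepS S r <-> exists a, sig a (2 * m + r) = y.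
Proof.
move=> HS y; rewrite mem_stepS; split.
  move=> [x [/HS [a <-] [b ->]]]; exists (2 * a + b).
  by rewrite sig_rec.
move=> [a' <-].
have -> : a' = 2 * a'./2 + odd a' by lia.
rewrite sig_rec; exists (sig a'./2 m); split; first by apply/HS; exists a'./2.
by exists (odd a').
Qed.

Lemma binary_rec n : 0 < n -> binary n = rcons (binary n./2) (odd n).
Proof.
case: n => [//|k] _.
rewrite /binary -rev_cons; congr rev.
rewrite [bits_lsb k.+1 k.+1]/=.
rewrite (@bits_fuel k (uphalf k) (uphalf k)); try lia.
congr (_ :: _); lia.
Qed.

Lemma Sl0 : nth [::] Sl 0 = stepS R0 true.
Proof. apply: eqseqf_eq; vm_compute; reflexivity. Qed.
Lemma ql0 : nth 0 ql 0 = 1.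
Proof. vm_compute; reflexivity. Qed.

Lemma size_B s0 l : size (foldl g_S s0 l) = size s0 + size l.
Proof.
elim/last_ind: l => [|l pr IH]; first by rewrite addn0.
by rewrite foldl_rcons /g_S size_rcons IH size_rcons addnS.
Qed.

Lemma g_S_eq acc pr : g_S acc pr = rcons acc (stepS (nth [::] acc pr.1) pr.2).
Proof. by []. Qed.

Lemma build_nth s0 l k : size s0 = 1 -> k < size l ->
  (forall k', k' < size l -> (nth (0, false) l k').1 <= k') ->
  nth [::] (foldl g_S s0 l) k.+1 =
  stepS (nth [::] (foldl g_S s0 l) (nth (0, false) l k).1) (nth (0, false) l k).2.
Proof.
move=> Hs0; elim/last_ind: l k => [|l pr IH] k //.
rewrite size_rcons => Hk Hpar.
have HB := size_B s0 l; rewrite Hs0 add1n in HB.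
rewrite foldl_rcons g_S_eq.
have Hpar' : forall k', k' < size l -> (nth (0, false) l k').1 <= k'.
  move=> k' Hk'; have := Hpar k' (ltac:(lia)); rewrite nth_rcons Hk' //.
rewrite !nth_rcons.
case: (ltnP k (size l)) => Hkl.
  rewrite HB ltnS Hkl IH //.
  have Hp := Hpar' k Hkl.
  by rewrite ifT //; lia.
have Ek : k = size l by lia.
subst k; rewrite HB ltnn !eqxx /=.
have Hp := Hpar (size l) (ltac:(lia)).
rewrite nth_rcons ltnn !eqxx /= in Hp.
by rewrite ifT //; lia.
Qed.

Lemma Slsize : size Sl = (size entries).+1.
Proof. by rewrite /Sl size_B. Qed.

Lemma Sl_nth k : k < size entries ->
  (forall k', k' < size entries -> (nth (0, false) entries k').1 <= k') ->
  nth [::] Sl k.+1 = stepS (nth [::] Sl (nth (0, false) entries k).1) (nth (0, false) entries k).2.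
Proof. by move=> Hk Hpar; rewrite /Sl; apply: build_nth. Qed.

Lemma check_parts : [/\ checkE = true, checkC_gen Sl ql = true & checkA_gen Sl ql = true].
Proof. by have := check_ok; rewrite /check_gen => /and3P [-> -> ->]. Qed.

Lemma node_props i (r : bool) : i < size Sl ->
  exists j, [/\ j < size Sl, stepS (nth [::] Sl i) r = nth [::] Sl j &
                nth 0 ql j = delta (nth 0 ql i) r].
Proof.
have [HE HC _] := check_parts.
move: HC; rewrite /checkC_gen => /andP [_ /allP H] Hi.
have Hpar : forall k', k' < size entries -> (nth (0, false) entries k').1 <= k'.
  move=> k' Hk'; move: HE; rewrite /checkE => /allP /(_ k'); rewrite mem_iota add0n.
  by move=> /(_ Hk').
move: (H i); rewrite mem_iota add0n => /(_ Hi).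
case: (nth (0, 0) succ i) => j0 j1.
move=> /and5P [H0 H1 E0 /eqP Q0 /andP [E1 /eqP Q1]].
have Hs : forall j (r : bool), j < size Sl ->
  (if tree j i r then true else eqseqf (stepS (nth [::] Sl i) r) (nth [::] Sl j)) ->
  stepS (nth [::] Sl i) r = nth [::] Sl j.
  move=> j r' Hj; case: ifP => [/andP [Hj0 /eqP Ht] _|_ /eqseqf_eq //].
  have Hk : j.-1 < size entries by rewrite Slsize in Hj; lia.
  have := Sl_nth Hk Hpar.
  rewrite Ht (_ : j.-1.+1 = j); last by lia.
  by move=> ->.
case: r; [exists j1 | exists j0]; split => //; exact: Hs.
Qed.

Lemma inv n : 0 < n -> exists i, [/\ i < size Sl, nth 0 ql i = foldl delta 0 (binary n) &
  forall x, x \in nth [::] Sl i <-> exists a, sig a n = x].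
Proof.
elim/ltn_ind: n => n IH Hn.
case: (ltnP 1 n) => Hn1.
  have Hm : 0 < n./2 by lia.
  have [i [Hi Hq HS]] := IH n./2 (ltac:(lia)) Hm.
  have [j [Hj Ej Qj]] := node_props (odd n) Hi.
  exists j; split => //.
    by rewrite Qj binary_rec // foldl_rcons Hq.
  move=> x; rewrite -Ej.
  have := step_ok (odd n) HS x.
  by have -> : 2 * n./2 + odd n = n by lia.
have -> : n = 2 * 0 + true by rewrite /=; lia.
exists 0; split; first by rewrite Slsize.
  by rewrite ql0.
move=> x; rewrite Sl0; apply: step_ok.
exact: R0_ok.
Qed.

Lemma unb_Gb i n : unbordered (factor t i n) <-> Gb 0 i n = false.
Proof.
rewrite /unbordered bordered_Gp; split.
  by move=> H; apply/negP => /GbP.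
by move=> H /GbP; rewrite H.
Qed.

Lemma flag_sig a n : flag (sig a n) = ~~ Gb 0 a n.
Proof. by []. Qed.

Theorem theorem4 (n : nat) :
  (exists i : nat, unbordered (factor thue_morse i n)) <->
  ~ matches re_thm4 (binary n).
Proof.
rewrite re_dfa.
case: n => [|n].
  split => // _; exists 0; apply/unb_Gb; by [].
have [i [Hi Hq HS]] := inv (ltn0Sn n).
have [_ _ HA] := check_parts.
move: HA; rewrite /checkA_gen => /allP /(_ i).
rewrite mem_iota add0n => /(_ Hi) /eqP HA.
rewrite -Hq; split.
  move=> [a /unb_Gb Ha].
  have : has flag (nth [::] Sl i).
    by apply/hasP; exists (sig a n.+1); [apply/HS; exists a | rewrite flag_sig Ha].
  by rewrite HA => /eqP.
move=> Hq4.
have : has flag (nth [::] Sl i) by rewrite HA; apply/eqP.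
move/hasP => [x /HS [a <-]]; rewrite flag_sig => Ha.
by exists a; apply/unb_Gb; move: Ha; case: (Gb 0 a n.+1).
Qed.
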